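(* Let $n$ and $k$ be integers with $1\le k<n/2$. If $A(n,k)\neq B(n,k)$, then $R_j=S_j=T_j$ for all $j\ge3$.
   Context: $\mathrm{DGP}(n,k)$ is the graph with vertex set $\{(u_i,j),(v_i,j): 0\le i\le n-1,\ j\in\{0,1\}\}$ and edges $\{(u_i,j),(u_{i+1},1-j)\}$ (outer edges), $\{(u_i,j),(v_i,1-j)\}$ (spokes, forming the set $\mathcal{S}$), $\{(v_i,j),(v_{i+k},1-j)\}$ (inner edges), subscripts mod $n$ (the canonical double cover of $\mathrm{GP}(n,k)$). $A(n,k)=\mathrm{Aut}(\mathrm{DGP}(n,k))$ and $B(n,k)$ is the setwise stabilizer of $\mathcal{S}$ in $A(n,k)$. For a cycle $C$, $r(C),s(C),t(C)$ are its numbers of outer edges, spokes and inner edges. For $j\ge3$, $\mathcal{C}_j$ is the set of $j$-cycles of $\mathrm{DGP}(n,k)$, and $R_j=\sum_{C\in\mathcal{C}_j}r(C)$, $S_j=\sum_{C\in\mathcal{C}_j}s(C)$, $T_j=\sum_{C\in\mathcal{C}_j}t(C)$. *)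

(* Defs.v *)
From mathcomp Require Import all_boot all_fingroup.
Set Implicit Arguments. Unset Strict Implicit. Unset Printing Implicit Defensive.

(* Vertices of DGP(n,k): (b, i, j) with b = true for u_i, b = false for v_i,
   i : 'I_n the subscript, j : bool the layer (j = true encodes 1). *)
Definition V (n : nat) : finType := (bool * 'I_n * bool)%type.

Definition vkind n (x : V n) : bool := x.1.1.
Definition vidx n (x : V n) : nat := val x.1.2.
Definition vlay n (x : V n) : bool := x.2.

Definition outer_adj n (x y : V n) : bool :=
  [&& vkind x, vkind y, vlay y == ~~ vlay x &
      (vidx y == (vidx x + 1) %% n) || (vidx x == (vidx y + 1) %% n)].

Definition spoke_adj n (x y : V n) : bool :=
  [&& vkind x != vkind y, vidx x == vidx y & vlay y == ~~ vlay x].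

Definition inner_adj n k (x y : V n) : bool :=
  [&& ~~ vkind x, ~~ vkind y, vlay y == ~~ vlay x &
      (vidx y == (vidx x + k) %% n) || (vidx x == (vidx y + k) %% n)].

Definition dgp_adj n k (x y : V n) : bool :=
  [|| outer_adj x y, spoke_adj x y | inner_adj k x y].

Definition is_outer_edge n (e : {set V n}) : bool :=
  [exists x, exists y, (e == [set x; y]) && outer_adj x y].
Definition is_spoke n (e : {set V n}) : bool :=
  [exists x, exists y, (e == [set x; y]) && spoke_adj x y].
Definition is_inner_edge n k (e : {set V n}) : bool :=
  [exists x, exists y, (e == [set x; y]) && inner_adj k x y].

Definition Aut_DGP n k : {set {perm V n}} :=
  [set p : {perm V n} | [forall x, forall y, dgp_adj k (p x) (p y) == dgp_adj k x y]].

Definition B_DGP n k : {set {perm V n}} :=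
  [set p in Aut_DGP n k |
     [forall e : {set V n}, is_spoke (p @: e) == is_spoke e]].

Definition cycle_edges n j (t : j.-tuple (V n)) : {set {set V n}} :=
  [set [set tnth t i; nth (tnth t i) t (i.+1 %% j)] | i : 'I_j].

Definition is_cycle_tuple n k j (t : j.-tuple (V n)) : bool :=
  uniq t && [forall i : 'I_j, dgp_adj k (tnth t i) (nth (tnth t i) t (i.+1 %% j))].

Definition cycles n k j : {set {set {set V n}}} :=
  [set C | [exists t : j.-tuple (V n), is_cycle_tuple k t && (C == cycle_edges t)]].

Definition r_of n (C : {set {set V n}}) : nat := #|[set e in C | is_outer_edge e]|.
Definition s_of n (C : {set {set V n}}) : nat := #|[set e in C | is_spoke e]|.
Definition t_of n k (C : {set {set V n}}) : nat := #|[set e in C | is_inner_edge k e]|.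

Definition R_ n k j : nat := \sum_(C in cycles n k j) r_of C.
Definition S_ n k j : nat := \sum_(C in cycles n k j) s_of C.
Definition T_ n k j : nat := \sum_(C in cycles n k j) t_of k C.

(* Main.v *)
Require Import Defs.
From mathcomp Require Import all_boot all_fingroup.
Set Implicit Arguments. Unset Strict Implicit. Unset Printing Implicit Defensive.

Definition cnt n k j (e : {set V n}) : nat := #|[set C in cycles n k j | e \in C]|.

Lemma imset2p (T U : finType) (g : T -> U) (a b : T) : g @: [set a; b] = [set g a; g b].
Proof. by rewrite imsetU1 imset_set1. Qed.

Lemma cycles_map n k j (g : V n -> V n) (C : {set {set V n}}) :
  injective g -> (forall x y, dgp_adj k x y -> dgp_adj k (g x) (g y)) ->
  C \in cycles n k j -> [set g @: f | f : {set V n} in C] \in cycles n k j.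
Proof.
move=> ginj gadj; rewrite !inE => /existsP [t /andP [/andP [tu /forallP tadj] /eqP ->]].
apply/existsP; exists (map_tuple g t).
apply/andP; split; last first.
  rewrite /cycle_edges -imset_comp; apply/eqP/eq_imset => i /=.
  rewrite imset2p tnth_map; congr [set _; _].
  have hi : i.+1 %% j < size t by rewrite size_tuple ltn_pmod // (leq_ltn_trans _ (ltn_ord i)).
  by rewrite (nth_map (tnth t i)) //= (set_nth_default (g (tnth t i))) ?size_map //.
apply/andP; split; first by rewrite map_inj_uniq.
apply/forallP => i; rewrite tnth_map.
have hi : i.+1 %% j < size t by rewrite size_tuple ltn_pmod // (leq_ltn_trans _ (ltn_ord i)).
by rewrite (nth_map (tnth t i)) //; apply: gadj.
Qed.

Lemma cnt_le n k j (g : V n -> V n) (e : {set V n}) :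
  injective g -> (forall x y, dgp_adj k x y -> dgp_adj k (g x) (g y)) ->
  cnt k j e <= cnt k j (g @: e).
Proof.
move=> ginj gadj; rewrite /cnt.
set F := fun C : {set {set V n}} => [set g @: f | f : {set V n} in C].
have Finj : injective F by apply: imset_inj; apply: imset_inj.
rewrite -(card_imset _ Finj); apply: subset_leq_card; apply/subsetP => C' /imsetP [C].
rewrite inE => /andP [Cc eC] ->; rewrite inE cycles_map //=.
by apply: imset_f.
Qed.

Lemma double_count n k j (P : pred {set V n}) :
  \sum_(C in cycles n k j) #|[set e in C | P e]| = \sum_(e | P e) cnt k j e.
Proof.
rewrite /cnt.
transitivity (\sum_(C in cycles n k j) \sum_(e | P e) (e \in C : nat)).
  apply: eq_bigr => C _; rewrite -sum1_card big_mkcond [RHS]big_mkcond /=.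
  by apply: eq_bigr => e _; rewrite inE; case: (e \in C); case: (P e).
rewrite exchange_big /=; apply: eq_bigr => e _.
rewrite -sum1_card big_mkcond [RHS]big_mkcond /=.
by apply: eq_bigr => C _; rewrite [in RHS]inE; case: (C \in cycles n k j); case: (e \in C).
Qed.

Definition ad N (i : 'I_N.+1) (d : nat) : 'I_N.+1 := inord ((i + d) %% N.+1).
Lemma adE N (i : 'I_N.+1) d : val (ad i d) = (i + d) %% N.+1.
Proof. by rewrite /= inordK // ltn_pmod. Qed.

Lemma modkey M a b m d : a < M ->
  ((a + m) %% M == ((b + m) %% M + d) %% M) = (a == (b + d) %% M).
Proof.
move=> aM; by rewrite modnDml addnAC eqn_modDr (modn_small aM).

Qed.

Lemma modkey0 M a b m : a < M -> b < M ->
  ((a + m) %% M == (b + m) %% M) = (a == b).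
Proof. by move=> aM bM; rewrite eqn_modDr !modn_small. Qed.

Definition rotf N (m : nat) (s : bool) (x : V N.+1) : V N.+1 :=
  (x.1.1, ad x.1.2 m, x.2 (+) s).

Lemma rotf_adj N k m s (x y : V N.+1) : dgp_adj k (rotf m s x) (rotf m s y) = dgp_adj k x y.
Proof.
case: x => [[bx ix] lx]; case: y => [[by_ iy] ly].
rewrite /dgp_adj /outer_adj /spoke_adj /inner_adj /vkind /vidx /vlay /rotf /= !adE.
have l1 : (ly (+) s == ~~ (lx (+) s)) = (ly == ~~ lx) by case: lx; case: ly; case: s.
rewrite l1 !modkey //.
rewrite modkey0 //.

Qed.

Lemma rotf_inj N m s : injective (@rotf N m s).
Proof.
move=> [[bx ix] lx] [[by_ iy] ly]; rewrite /rotf /= => [[-> /(congr1 val)]].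
rewrite !adE => /eqP h1 h2.
have -> : ly = lx by move: h2; case: lx; case: ly; case: s.
congr (_, _, _); apply: val_inj => /=; apply/eqP.
by move: h1; rewrite modkey0.
Qed.

Definition ed N (bx by_ : bool) (d : nat) (p : 'I_N.+1 * bool) : {set V N.+1} :=
  [set (bx, p.1, p.2); (by_, ad p.1 d, ~~ p.2)].

Definition rotp N m s (p : 'I_N.+1 * bool) := (ad p.1 m, p.2 (+) s).

Lemma ad_comm N (i : 'I_N.+1) d m : ad (ad i d) m = ad (ad i m) d.
Proof. by apply: val_inj; rewrite !adE !modnDml addnAC. Qed.

Lemma rot_ed N bx by_ d m s p :
  @rotf N m s @: ed bx by_ d p = ed bx by_ d (rotp m s p).
Proof.
rewrite imset2p /rotf /rotp /=; congr [set _; _].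
by rewrite ad_comm; congr (_, _, _); case: p.2; case: s.
Qed.

Lemma cnt_rot N k j m s e : cnt k j e <= cnt k j (@rotf N m s @: e).
Proof. by apply: cnt_le; [apply: rotf_inj | move=> x y; rewrite rotf_adj]. Qed.

Definition p0 N : 'I_N.+1 * bool := (ord0, false).

Lemma cnt_const N k j bx by_ d (p : 'I_N.+1 * bool) :
  cnt k j (ed bx by_ d p) = cnt k j (ed bx by_ d (@p0 N)).
Proof.
apply/eqP; rewrite eqn_leq; apply/andP; split.
  apply: (leq_trans (@cnt_rot N k j (N.+1 - p.1) p.2 _)); rewrite rot_ed.
  have -> : rotp (N.+1 - p.1) p.2 p = p0 N.
    rewrite /rotp /p0 addbb; congr (_, _); apply: val_inj; rewrite adE /=.
    by rewrite subnKC ?modnn // ltnW.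
  by [].
apply: (leq_trans (@cnt_rot N k j p.1 p.2 _)); rewrite rot_ed.
have -> : rotp p.1 p.2 (p0 N) = p.
  rewrite /rotp /p0 /=; case: p => i l /=; congr (_, _); apply: val_inj.
  by rewrite adE add0n modn_small.
by [].
Qed.

Lemma set2C (T : finType) (a b : T) : [set a; b] = [set b; a].
Proof. by rewrite setUC. Qed.

Lemma mk_edge N (P : V N.+1 -> V N.+1 -> bool) (e : {set V N.+1}) x y :
  e = [set x; y] -> P x y -> [exists x, exists y, (e == [set x; y]) && P x y].
Proof. by move=> -> h; apply/existsP; exists x; apply/existsP; exists y; rewrite eqxx. Qed.

Lemma outer_ed N (e : {set V N.+1}) :
  is_outer_edge e = [exists p, e == ed true true 1 p].
Proof.
apply/idP/idP.
  case/existsP => [[[bx ix] lx]] /existsP [[[by_ iy] ly]] /andP [/eqP ->].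
  rewrite /outer_adj /vkind /vidx /vlay /= => /and4P [-> -> /eqP ->] /orP [] /eqP h.
    apply/existsP; exists (ix, lx); apply/eqP; rewrite /ed /=; congr [set _; _].
    by congr (_, _, _); apply: val_inj; rewrite adE.
  apply/existsP; exists (iy, ~~ lx); rewrite set2C /ed /= negbK; apply/eqP; congr [set _; _].
  by congr (_, _, _); apply: val_inj; rewrite adE.
case/existsP => [[i l]] /eqP ->; apply: (mk_edge (erefl _)).
by rewrite /outer_adj /vkind /vidx /vlay /= adE !eqxx.
Qed.

Lemma inner_ed N k (e : {set V N.+1}) :
  is_inner_edge k e = [exists p, e == ed false false k p].
Proof.
apply/idP/idP.
  case/existsP => [[[bx ix] lx]] /existsP [[[by_ iy] ly]] /andP [/eqP ->].
  rewrite /inner_adj /vkind /vidx /vlay /= => /and4P [/negbTE -> /negbTE -> /eqP ->] /orP [] /eqP h.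
    apply/existsP; exists (ix, lx); apply/eqP; rewrite /ed /=; congr [set _; _].
    by congr (_, _, _); apply: val_inj; rewrite adE.
  apply/existsP; exists (iy, ~~ lx); rewrite set2C /ed /= negbK; apply/eqP; congr [set _; _].
  by congr (_, _, _); apply: val_inj; rewrite adE.
case/existsP => [[i l]] /eqP ->; apply: (mk_edge (erefl _)).
by rewrite /inner_adj /vkind /vidx /vlay /= adE !eqxx.
Qed.

Lemma spoke_ed N (e : {set V N.+1}) :
  is_spoke e = [exists p, e == ed true false 0 p].
Proof.
apply/idP/idP.
  case/existsP => [[[bx ix] lx]] /existsP [[[by_ iy] ly]] /andP [/eqP ->].
  rewrite /spoke_adj /vkind /vidx /vlay /= => /and3P [hb /eqP h /eqP ->].
  have iE : iy = ix by apply: val_inj.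
  have ad0 : ad ix 0 = ix by apply: val_inj; rewrite adE addn0 modn_small.
  case: bx hb => /=; case: by_ => // _.
    by apply/existsP; exists (ix, lx); rewrite /ed /= iE ad0.
  by apply/existsP; exists (ix, ~~ lx); rewrite set2C /ed /= iE ad0 negbK.
case/existsP => [[i l]] /eqP ->; apply: (mk_edge (erefl _)).
by rewrite /spoke_adj /vkind /vidx /vlay /= adE addn0 modn_small // !eqxx.
Qed.

Lemma ed_inj N bx by_ d : (bx != by_) || ~~ (N.+1 %| d.*2) -> injective (@ed N bx by_ d).
Proof.
move=> hyp [i l] [i' l'] E.
have : (bx, i, l) \in ed bx by_ d (i', l') by rewrite -E /ed !inE eqxx.
rewrite /ed !inE /= => /orP [/eqP [] -> -> // | /eqP [eb ei el]].
have : (by_, ad i d, ~~ l) \in ed bx by_ d (i', l') by rewrite -E /ed !inE eqxx orbT.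
rewrite /ed !inE /= => /orP [/eqP [_ ei' _] | /eqP h]; last first.
  by move/(congr1 snd): h => /=; rewrite el; case: (l').
exfalso; move: hyp; rewrite eb eqxx /= => /negP; apply.
have : val i' = val (ad (ad i' d) d) by rewrite -ei -ei'.
rewrite !adE modnDml -addnA addnn => h.
have : (i' + 0 == i' + d.*2 %[mod N.+1]) by rewrite addn0 -h modn_small.
by rewrite eqn_modDl mod0n /dvdn eq_sym.
Qed.

Definition cO N k j := cnt k j (ed true true 1 (p0 N)).
Definition cS N k j := cnt k j (ed true false 0 (p0 N)).
Definition cI N k j := cnt k j (ed false false k (p0 N)).

Lemma cls_O N k j (e : {set V N.+1}) : is_outer_edge e -> cnt k j e = cO N k j.
Proof. by rewrite outer_ed => /existsP [p /eqP ->]; rewrite cnt_const. Qed.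
Lemma cls_S N k j (e : {set V N.+1}) : is_spoke e -> cnt k j e = cS N k j.
Proof. by rewrite spoke_ed => /existsP [p /eqP ->]; rewrite cnt_const. Qed.
Lemma cls_I N k j (e : {set V N.+1}) : is_inner_edge k e -> cnt k j e = cI N k j.
Proof. by rewrite inner_ed => /existsP [p /eqP ->]; rewrite cnt_const. Qed.

Lemma alpha N k j (g : V N.+1 -> V N.+1) (e : {set V N.+1}) :
  (forall f : {set V N.+1}, cnt k j (g @: f) = cnt k j f) ->
  (forall x y, dgp_adj k x y -> dgp_adj k (g x) (g y)) ->
  is_spoke e -> ~~ is_spoke (g @: e) -> cO N k j = cS N k j /\ cS N k j = cI N k j.
Proof.
move=> gc ga; rewrite spoke_ed => /existsP [[i l] /eqP ->] ns.
have ad0 : ad i 0 = i by apply: val_inj; rewrite adE addn0 modn_small.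
have huv : dgp_adj k (true, i, l) (false, ad i 0, ~~ l).
  by rewrite /dgp_adj /spoke_adj /vkind /vidx /vlay /= ad0 !eqxx.
have hS : cnt k j (ed true false 0 (i, l)) = cS N k j by rewrite cnt_const.
have := ga _ _ huv; rewrite {1}/dgp_adj => /or3P [ho | hs | hi].
- have cs : cS N k j = cO N k j.
    by rewrite -hS -gc; apply: cls_O; rewrite /ed imset2p; apply: mk_edge (erefl _) ho.
  case/and4P: ho => _ kv _ _.
  have hvw : dgp_adj k (false, ad i 0, ~~ l) (false, ad (ad i 0) k, ~~ ~~ l).
    by rewrite /dgp_adj /inner_adj /vkind /vidx /vlay /= adE !eqxx.
  have hI : cnt k j (ed false false k (ad i 0, ~~ l)) = cI N k j by rewrite cnt_const.
  have := ga _ _ hvw; rewrite {1}/dgp_adj => /or3P [h | h | h].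
  + have : cI N k j = cO N k j.
      by rewrite -hI -gc; apply: cls_O; rewrite /ed imset2p; apply: mk_edge (erefl _) h.
    by move=> ci; rewrite -cs ci.
  + have : cI N k j = cS N k j.
      by rewrite -hI -gc; apply: cls_S; rewrite /ed imset2p; apply: mk_edge (erefl _) h.
    by move=> ci; rewrite cs ci cs.
  + by move: h; rewrite /inner_adj kv.
- by case/negP: ns; rewrite /ed imset2p; apply: mk_edge (erefl _) hs.
- have cs : cS N k j = cI N k j.
    by rewrite -hS -gc; apply: cls_I; rewrite /ed imset2p; apply: mk_edge (erefl _) hi.
  case/and4P: hi => ku _ _ _.
  have huw : dgp_adj k (true, i, l) (true, ad i 1, ~~ l).
    by rewrite /dgp_adj /outer_adj /vkind /vidx /vlay /= adE !eqxx.
  have hO : cnt k j (ed true true 1 (i, l)) = cO N k j by rewrite cnt_const.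
  have := ga _ _ huw; rewrite {1}/dgp_adj => /or3P [h | h | h].
  + by move: h; rewrite /outer_adj (negbTE ku).
  + have : cO N k j = cS N k j.
      by rewrite -hO -gc; apply: cls_S; rewrite /ed imset2p; apply: mk_edge (erefl _) h.
    by move=> co; rewrite co cs.
  + have : cO N k j = cI N k j.
      by rewrite -hO -gc; apply: cls_I; rewrite /ed imset2p; apply: mk_edge (erefl _) h.
    by move=> co; rewrite co cs.
Qed.

Lemma sum_param N (P : pred {set V N.+1}) (h : 'I_N.+1 * bool -> {set V N.+1})
  (F : {set V N.+1} -> nat) :
  injective h -> (forall e, P e = [exists p, e == h p]) ->
  \sum_(e | P e) F e = \sum_q F (h q).
Proof.
move=> hinj hP.
rewrite (eq_bigl (fun e => e \in h @: setT)); last first.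
  move=> e; rewrite hP; apply/existsP/imsetP => [[p /eqP ->] | [p _ ->]]; by exists p.
rewrite big_imset; last by move=> x y _ _; apply: hinj.
by apply: eq_bigl => q; rewrite inE.
Qed.

Lemma imK (T : finType) (p : {perm T}) (f : {set T}) :
  p @: (p^-1%g @: f) = f /\ p^-1%g @: (p @: f) = f.
Proof.
split; rewrite -imset_comp; apply/setP => x; apply/imsetP/idP.
- by move=> [y yf ->]; rewrite /= permKV.
- by move=> xf; exists x => //=; rewrite permKV.
- by move=> [y yf ->]; rewrite /= permK.
- by move=> xf; exists x => //=; rewrite permK.
Qed.

Theorem lemma5p7 (n k : nat) :
  1 <= k -> k.*2 < n -> Aut_DGP n k != B_DGP n k ->
  forall j : nat, 3 <= j -> R_ n k j = S_ n k j /\ S_ n k j = T_ n k j.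
Proof.
case: n => [|N] // k1 k2 hAB j _.
have [cOS cSI] : cO N k j = cS N k j /\ cS N k j = cI N k j.
  have sub : B_DGP N.+1 k \subset Aut_DGP N.+1 k.
    by apply/subsetP => p; rewrite inE => /andP [].
  have : ~~ (Aut_DGP N.+1 k \subset B_DGP N.+1 k) by move: hAB; rewrite eqEsubset sub andbT.
  case/subsetPn => p pA pB.
  have hp : forall x y, dgp_adj k (p x) (p y) = dgp_adj k x y.
    by move=> x y; move: pA; rewrite inE => /forallP /(_ x) /forallP /(_ y) /eqP.
  have hpi : forall x y, dgp_adj k (p^-1%g x) (p^-1%g y) = dgp_adj k x y.
    by move=> x y; rewrite -hp !permKV.
  have gc : forall f : {set V N.+1}, cnt k j (p @: f) = cnt k j f.
    move=> f; apply/eqP; rewrite eqn_leq; apply/andP; split; last first.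
      by apply: cnt_le; [exact: perm_inj | move=> x y; rewrite hp].
    rewrite -{2}(imK p f).2; apply: cnt_le => [|x y]; [exact: perm_inj | by rewrite hpi].
  have gci : forall f : {set V N.+1}, cnt k j (p^-1%g @: f) = cnt k j f.
    by move=> f0; rewrite -gc (imK p f0).1.
  move: pB; rewrite inE pA /= => /forallPn [e].
  case sE: (is_spoke e) => /=.
    rewrite eqb_id => ns; apply: (alpha gc _ sE ns).
    by move=> x y; rewrite hp.
  rewrite eqbF_neg negbK => sp.
  apply: (alpha gci _ sp); first by move=> x y; rewrite hpi.
  by rewrite (imK p e).2 sE.
have i2 : ~~ (N.+1 %| 2).
  have h2 : 2 <= k.*2 by rewrite -muln2 leq_pmull.
  have h3 : 2 < N.+1 := leq_ltn_trans h2 k2.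
  by apply/negP => /(dvdn_leq (isT : 0 < 2)); rewrite leqNgt h3.
have ik : ~~ (N.+1 %| k.*2).
  by apply/negP => /(dvdn_leq _); rewrite -muln2 muln_gt0 k1 /= => /(_ isT); rewrite muln2 leqNgt k2.
have RE : R_ N.+1 k j = \sum_(q : 'I_N.+1 * bool) cO N k j.
  rewrite /R_ /r_of (double_count _ _ (fun e => is_outer_edge e)).
  rewrite (sum_param _ (@ed_inj N true true 1 _) (@outer_ed N)) ?i2 //.
  by apply: eq_bigr => q _; rewrite cnt_const.
have SE : S_ N.+1 k j = \sum_(q : 'I_N.+1 * bool) cS N k j.
  rewrite /S_ /s_of (double_count _ _ (fun e => is_spoke e)).
  rewrite (sum_param _ (@ed_inj N true false 0 _) (@spoke_ed N)) //.
  by apply: eq_bigr => q _; rewrite cnt_const.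
have TE : T_ N.+1 k j = \sum_(q : 'I_N.+1 * bool) cI N k j.
  rewrite /T_ /t_of (double_count _ _ (fun e => is_inner_edge k e)).
  rewrite (sum_param _ (@ed_inj N false false k _) (@inner_ed N k)) ?ik //.
  by apply: eq_bigr => q _; rewrite cnt_const.
by rewrite RE SE TE cOS cSI.
Qed.
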